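(* Let $(\mathbf{L},\mathbf{R})\in\mathcal{P}_{\mathsf N}$ be centered. Then every contraction map for $(\mathbf{L},\mathbf{R})$ is a dominance map for $(\mathbf{L},\mathbf{R})$. Consequently, if a centered pair admits a contraction map, it admits a dominance map.
   Context: $\mathcal{P}_{\mathsf N}$ denotes the set of pairs $(\mathbf{L},\mathbf{R})$ of $(0,1)$-matrices, $\mathbf{L}$ of size $(\mathsf N+1)\times m_L$ and $\mathbf{R}$ of size $(\mathsf N+1)\times m_R$, such that some index $p\in[\mathsf N+1]$ has row $p$ of $\mathbf{L}$ and row $p$ of $\mathbf{R}$ both zero. $\mathbf{A}_{(i)}$ denotes the $i$-th row; $e$ the all-ones row vector; $|v|=\sum_k|v_k|$; $|x-x'|$ the Hamming distance; $\le$ between vectors is componentwise. The pair is centered if it is balanced ($|\mathbf{L}_{(i)}|=|\mathbf{R}_{(i)}|$ for all $i$) and for some $i$, $\mathbf{L}_{(i)}=e=\mathbf{R}_{(i)}$. A contraction map is $f:\{0,1\}^{m_L}\to\{0,1\}^{m_R}$ with $f(\mathbf{L}_{(i)})=\mathbf{R}_{(i)}$ for all $i$ and $|x-x'|\ge|f(x)-f(x')|$ for all $x,x'$. A dominance map is $f:\{0,1\}^{m_L}\to\{0,1\}^{m_R}$ with $|u|=|f(u)|$ and $\mathbf{L}u^T\le\mathbf{R}f(u)^T$ for all $u\in\{0,1\}^{m_L}$. *)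

(* Defs.v *)
(* (0,1)-matrices are boolean matrices; {0,1}^m = 'rV[bool]_m. *)
From mathcomp Require Import all_boot all_order all_algebra.
Set Implicit Arguments. Unset Strict Implicit. Unset Printing Implicit Defensive.

Definition weight (m : nat) (v : 'rV[bool]_m) : nat := \sum_(j < m) nat_of_bool (v ord0 j).

Definition hamming (m : nat) (x y : 'rV[bool]_m) : nat :=
  \sum_(j < m) nat_of_bool (x ord0 j != y ord0 j).

Definition inP (N mL mR : nat) (L : 'M[bool]_(N.+1, mL)) (R : 'M[bool]_(N.+1, mR)) : Prop :=
  exists p : 'I_N.+1, (forall j, L p j = false) /\ (forall k, R p k = false).

Definition balanced (N mL mR : nat) (L : 'M[bool]_(N.+1, mL)) (R : 'M[bool]_(N.+1, mR)) : Prop :=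
  forall i : 'I_N.+1, weight (row i L) = weight (row i R).

Definition centered (N mL mR : nat) (L : 'M[bool]_(N.+1, mL)) (R : 'M[bool]_(N.+1, mR)) : Prop :=
  balanced L R /\ exists i : 'I_N.+1, (forall j, L i j = true) /\ (forall k, R i k = true).

Definition contraction_map (N mL mR : nat) (L : 'M[bool]_(N.+1, mL)) (R : 'M[bool]_(N.+1, mR))
  (f : 'rV[bool]_mL -> 'rV[bool]_mR) : Prop :=
  (forall i : 'I_N.+1, f (row i L) = row i R) /\
  (forall x x' : 'rV[bool]_mL, hamming (f x) (f x') <= hamming x x').

Definition dominance_map (N mL mR : nat) (L : 'M[bool]_(N.+1, mL)) (R : 'M[bool]_(N.+1, mR))
  (f : 'rV[bool]_mL -> 'rV[bool]_mR) : Prop :=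
  forall u : 'rV[bool]_mL,
    weight u = weight (f u) /\
    (forall i : 'I_N.+1,
       \sum_(j < mL) (L i j : nat) * (u ord0 j : nat) <= \sum_(k < mR) (R i k : nat) * (f u ord0 k : nat)).

(* Main.v *)
Require Import Defs.
From mathcomp Require Import all_boot all_order all_algebra.
From mathcomp Require Import zify.

Lemma dot_id (m : nat) (a b : 'rV[bool]_m) :
  2 * (\sum_(j < m) (a ord0 j : nat) * (b ord0 j : nat)) + hamming a b = weight a + weight b.
Proof.
rewrite /hamming /weight big_distrr -!big_split /=.
apply: eq_bigr => j _; by case: (a ord0 j); case: (b ord0 j).
Qed.

Lemma ham0 (m : nat) (v w : 'rV[bool]_m) : (forall k, w ord0 k = false) -> hamming v w = weight v.
Proof.
move=> H; rewrite /hamming /weight; apply: eq_bigr => j _; rewrite H; by case: (v ord0 j).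
Qed.

Lemma ham1 (m : nat) (v w : 'rV[bool]_m) : (forall k, w ord0 k = true) -> hamming v w + weight v = m.
Proof.
move=> H; rewrite /hamming /weight -big_split /=.
rewrite (eq_bigr (fun _ => 1)); first by rewrite sum1_card card_ord.
move=> j _; rewrite H; by case: (v ord0 j).
Qed.

Lemma rowdot (n m : nat) (A : 'M[bool]_(n, m)) i (u : 'rV[bool]_m) :
  \sum_(j < m) (A i j : nat) * (u ord0 j : nat) = \sum_(j < m) (row i A ord0 j : nat) * (u ord0 j : nat).
Proof. by apply: eq_bigr => j _; rewrite mxE. Qed.

Theorem corollary2 (N mL mR : nat) (L : 'M[bool]_(N.+1, mL)) (R : 'M[bool]_(N.+1, mR)) :
  inP L R -> centered L R ->
  (forall f : 'rV[bool]_mL -> 'rV[bool]_mR, contraction_map L R f -> dominance_map L R f) /\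
  ((exists f, contraction_map L R f) -> exists g, dominance_map L R g).
Proof.
move=> [p [Lp Rp]] [Hbal [c [Lc Rc]]].
have H1 : forall f, contraction_map L R f -> dominance_map L R f.
  move=> f [Hrow Hc] u.
  have Hw : weight u = weight (f u).
    have h0 := Hc u (row p L); rewrite Hrow in h0.
    rewrite (@ham0 _ _ (row p R)) in h0; last by move=> k; rewrite mxE.
    rewrite (@ham0 _ _ (row p L)) in h0; last by move=> k; rewrite mxE.
    have h1 := Hc u (row c L); rewrite Hrow in h1.
    have e1 := @ham1 _ (f u) (row c R) (fun k => ltac:(by rewrite mxE)).
    have e2 := @ham1 _ u (row c L) (fun k => ltac:(by rewrite mxE)).
    have e3 := Hbal c.
    have e4 := @ham1 _ (row c L) (row c L) (fun k => ltac:(by rewrite mxE)).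
    have e5 := @ham1 _ (row c R) (row c R) (fun k => ltac:(by rewrite mxE)).
    have z1 : forall m (v : 'rV[bool]_m), hamming v v = 0.
      by move=> m v; rewrite /hamming big1 // => j _; rewrite eqxx.
    rewrite z1 in e4; rewrite z1 in e5.
    lia.
  split => // i.
  rewrite rowdot [X in _ <= X]rowdot.
  have d1 := @dot_id _ (row i L) u.
  have d2 := @dot_id _ (row i R) (f u).
  have h := Hc (row i L) u; rewrite Hrow in h.
  have e3 := Hbal i.
  lia.
split => //.
by move=> [f Hf]; exists f; apply: H1.
Qed.
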